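(* Fix a Polish sample space $\Omega$ and let $F,R$ be partially ordered topological spaces that are Souslin spaces with Borel order relations. The constant injection $$\mathrm{const}:F\times R\to\mathrm{DP}_\Omega(F,R),\quad (x_F,x_R)\mapsto {\downarrow}x_F\times{\uparrow}x_R=\{(y_F,y_R): y_F\preceq x_F,\ x_R\preceq y_R\}$$ is quasi-measurable.
   Context: A Souslin space is a Hausdorff space that is a continuous image of a Polish space; analytic sets are continuous images of Polish spaces. Quasi-universal spaces: a set $A$ with a set of maps $\Omega\to A$ (random variables) containing constants and closed under precomposition with Borel measurable maps $\Omega\to\Omega$; a map $f:A\to B$ is quasi-measurable if $f\circ\alpha$ is a random variable of $B$ for every random variable $\alpha$ of $A$. Conventions: the random variables of $F$ and $R$ are the Borel measurable maps from $\Omega$; those of $F\times R$ are pairs of such maps. $\mathrm{DP}_\Omega(F,R)$ is the set of upper sets of $F^{\mathrm{op}}\times R$ ($F$ with reversed order, componentwise order) of the form $\uparrow A$ with $A\subseteq F^{\mathrm{op}}\times R$ analytic, whose random variables are the maps $\alpha:\Omega\to\mathrm{DP}_\Omega(F,R)$ with analytic feasible set $\{(\omega,x_F,x_R):(x_F,x_R)\in\alpha(\omega)\}\subseteq\Omega\times F\times R$. *)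

(* Defs.v *)
From HB Require Import structures.
From mathcomp Require Import all_boot all_order all_algebra.
From mathcomp Require Import all_classical all_reals.
From mathcomp Require Import topology measurable_structure.
From mathcomp Require Import Rstruct.

Set Implicit Arguments.
Unset Strict Implicit.
Unset Printing Implicit Defensive.

Import Order.TTheory GRing.Theory Num.Theory.
Local Open Scope classical_set_scope.
Local Open Scope ring_scope.

Notation Real := Rdefinitions.R.

Definition is_metric (T : Type) (d : T -> T -> Real) : Prop :=
  [/\ forall x y, 0 <= d x y,
      forall x y, d x y = 0 <-> x = y,
      forall x y, d x y = d y x &
      forall x y z, d x z <= d x y + d y z].

Definition metric_induces (T : topologicalType) (d : T -> T -> Real) : Prop :=
  forall A : set T, open A <->
    (forall x, A x -> exists2 e : Real, 0 < e & [set y | d x y < e] `<=` A).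

Definition metric_complete (T : topologicalType) (d : T -> T -> Real) : Prop :=
  forall u : nat -> T,
    (forall e : Real, 0 < e -> exists N : nat, forall m n : nat,
        (N <= m)%N -> (N <= n)%N -> d (u m) (u n) < e) ->
    exists l : T, u @ \oo --> l.

Definition separable_space (T : topologicalType) : Prop :=
  exists D : set T, countable D /\ dense D.

Definition completely_metrizable (T : topologicalType) : Prop :=
  exists d : T -> T -> Real,
    [/\ is_metric d, metric_induces d & metric_complete d].

Definition polish (T : topologicalType) : Prop :=
  separable_space T /\ completely_metrizable T.

(* The empty space is
   Polish, so set0 is analytic; we state that case separately since we quantify
   over (possibly nonempty-only usable) topological types. *)
Definition analytic (T : topologicalType) (A : set T) : Prop :=
  A = set0 \/
  exists (P : topologicalType) (f : P -> T),
    [/\ polish P, continuous f & f @` setT = A].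

Definition souslin (T : topologicalType) : Prop :=
  hausdorff_space T /\ analytic (@setT T).

Definition borel (T : topologicalType) (A : set T) : Prop :=
  <<s (@open T) >> A.

Definition borel_measurable (T U : topologicalType) (f : T -> U) : Prop :=
  forall B : set U, borel B -> borel (f @^-1` B).

Definition partial_order (T : Type) (le : T -> T -> Prop) : Prop :=
  [/\ forall x, le x x,
      forall x y, le x y -> le y x -> x = y &
      forall x y z, le x y -> le y z -> le x z].

Definition borel_order (T : topologicalType) (le : T -> T -> Prop) : Prop :=
  borel [set p : T * T | le p.1 p.2].

Section DP.
Variables (Omega F R : topologicalType).
Variables (leF : F -> F -> Prop) (leR : R -> R -> Prop).

(* order of F^op x R:  a <= y  iff  y.1 <=_F a.1 and a.2 <=_R y.2 *)
Definition le_opprod (a y : F * R) : Prop := leF y.1 a.1 /\ leR a.2 y.2.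

Definition upclosure (A : set (F * R)) : set (F * R) :=
  [set y | exists2 a, A a & le_opprod a y].

(* elements of DP_Omega(F,R): sets of the form  up A  with A analytic
   (F^op x R has the same topology as F x R) *)
Definition in_DP (D : set (F * R)) : Prop :=
  exists A : set (F * R), analytic A /\ D = upclosure A.

Definition feasible (alpha : Omega -> set (F * R)) : set (Omega * F * R) :=
  [set p | alpha p.1.1 (p.1.2, p.2)].

Definition rv_DP (alpha : Omega -> set (F * R)) : Prop :=
  (forall w, in_DP (alpha w)) /\ analytic (feasible alpha).

Definition rv_FR (alpha : Omega -> F * R) : Prop :=
  borel_measurable (fun w => (alpha w).1) /\
  borel_measurable (fun w => (alpha w).2).

Definition quasi_measurable_to_DP (f : F * R -> set (F * R)) : Prop :=
  forall alpha : Omega -> F * R, rv_FR alpha -> rv_DP (f \o alpha).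

Definition const_DP (x : F * R) : set (F * R) :=
  [set y | leF y.1 x.1 /\ leR x.2 y.2].

End DP.

(* Main.v *)
Require Import Defs.
From HB Require Import structures.
From mathcomp Require Import all_boot all_order all_algebra all_classical all_reals.
From mathcomp Require Import topology measurable_structure Rstruct lra.
Import Order.TTheory GRing.Theory Num.Theory.
Local Open Scope classical_set_scope.
Local Open Scope ring_scope.
Notation RR := Rdefinitions.R.

Definition cauchy {T} (d : T -> T -> RR) (u : nat -> T) :=
  forall e : RR, 0 < e -> exists N, forall m n, (N <= m)%N -> (N <= n)%N -> d (u m) (u n) < e.
Definition lim_to {T} (d : T -> T -> RR) (u : nat -> T) l :=
  forall e : RR, 0 < e -> exists N, forall n, (N <= n)%N -> d (u n) l < e.

Record PRec := PRMk {
  car :> Type;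
  dist : car -> car -> RR;
  dist_met : is_metric dist;
  pt : car;
  cmpl : forall u, cauchy dist u -> exists l, lim_to dist u l;
  sep : exists en : nat -> car, forall x (e : RR), 0 < e -> exists k, dist x (en k) < e }.
Arguments dist {p}.
Arguments cmpl {p u}.

Section PBasics.
Variable P : PRec.
Implicit Types x y z : P.
Lemma d_ge0 x y : 0 <= dist x y. Proof. by case: (dist_met P). Qed.
Lemma d_eq0 x y : dist x y = 0 <-> x = y. Proof. by case: (dist_met P). Qed.
Lemma d_xx x : dist x x = 0. Proof. exact/d_eq0. Qed.
Lemma d_sym x y : dist x y = dist y x. Proof. by case: (dist_met P). Qed.
Lemma d_tri x y z : dist x z <= dist x y + dist y z. Proof. by case: (dist_met P). Qed.
End PBasics.
Arguments d_ge0 {P} x y.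
Arguments d_eq0 {P} x y.
Arguments d_xx {P} x.
Arguments d_sym {P} x y.
Arguments d_tri {P} x y z.

Lemma archi {e : RR} : 0 < e -> exists N : nat, N.+1%:R^-1 < e.
Proof.
move=> e0; exists (Num.trunc e^-1).
have h := truncnS_gt (e^-1).
rewrite invf_plt ?posrE //; exact: ltr0Sn.
Qed.

Definition mopen {P : PRec} (A : set P) :=
  forall x, A x -> exists2 e : RR, 0 < e & forall y, dist x y < e -> A y.
Definition mclosed {P : PRec} (A : set P) := mopen (~` A).
Definition mcont {P Q : PRec} (f : P -> Q) :=
  forall x (e : RR), 0 < e -> exists2 d : RR, 0 < d & forall y, dist x y < d -> dist (f x) (f y) < e.
Definition an {X : PRec} (A : set X) :=
  exists (P : PRec) (C : set P) (f : P -> X), [/\ mclosed C, mcont f & f @` C = A].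
Definition mborel {X : PRec} (A : set X) := <<s (@mopen X) >> A.

Lemma mcont_id (P : PRec) : mcont (@id P).
Proof. by move=> x e e0; exists e. Qed.

Lemma mcont_comp (P Q S : PRec) (f : P -> Q) (g : Q -> S) : mcont f -> mcont g -> mcont (g \o f).
Proof.
move=> hf hg x e e0; have [d d0 hd] := hg (f x) e e0.
have [d' d0' hd'] := hf x d d0; exists d' => // y /hd' /hd //.
Qed.

Lemma closed_an (X : PRec) (K : set X) : mclosed K -> an K.
Proof.
move=> hK; exists X, K, id; split => //; first exact: mcont_id.
by rewrite image_id.
Qed.

Lemma mclosed0 (X : PRec) : mclosed (@set0 X).
Proof. rewrite /mclosed /mopen => x _; exists 1 => // y _ []. Qed.
Lemma mclosedT (X : PRec) : mclosed (@setT X).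
Proof. by rewrite /mclosed /mopen => x /(_ I). Qed.

Lemma an0 (X : PRec) : an (@set0 X).
Proof. exact/closed_an/mclosed0. Qed.
Lemma anT (X : PRec) : an (@setT X).
Proof. exact/closed_an/mclosedT. Qed.

Lemma an_ne (X : PRec) (A : set X) : an A -> A !=set0 ->
  exists (P : PRec) (C : set P) (f : P -> X), [/\ mclosed C, mcont f, f @` C = A & C !=set0].
Proof.
move=> [P [C [f [h1 h2 h3]]]] [x Ax]; exists P, C, f; split => //.
by move: Ax; rewrite -h3 => -[c Cc _]; exists c.
Qed.

Arguments an_ne {X A}.
Definition dnat (m n : nat) : RR := if m == n then 0 else 1.

Lemma dnat_met : is_metric dnat.
Proof.
rewrite /dnat; split.
- by move=> x y; case: eqP.
- move=> x y; case: eqP => [-> //|neq]; split => [h|/neq //]; exfalso; have := @ltr01 RR; by rewrite h ltxx.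
- by move=> x y; rewrite eq_sym.
- move=> x y z; case: eqP => [->|]; case: eqP => [->|]; case: eqP => //; lra.
Qed.

Lemma dnat_cmpl : forall u, cauchy dnat u -> exists l, lim_to dnat u l.
Proof.
move=> u /(_ 1 ltr01) [N HN]; exists (u N) => e e0; exists N => n Nn.
have := HN n N Nn (leqnn N); rewrite /dnat; case: eqP => //; lra.
Qed.

Lemma dnat_sep : exists en : nat -> nat, forall x (e : RR), 0 < e -> exists k, dnat x (en k) < e.
Proof. by exists id => x e e0; exists x; rewrite /dnat eqxx. Qed.

Definition natP : PRec := @PRMk nat dnat dnat_met 0%N dnat_cmpl dnat_sep.

Lemma dnat_lt1 {m n : natP} : dist m n < 1 -> m = n.
Proof. by rewrite /= /dnat; case: eqP => // _; rewrite ltxx. Qed.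

Section Prod.
Variables P Q : PRec.
Definition dprod (a b : P * Q) : RR := dist a.1 b.1 + dist a.2 b.2.

Lemma dprod_met : is_metric dprod.
Proof.
rewrite /dprod; split.
- by move=> x y; apply: addr_ge0; apply: d_ge0.
- move=> [x1 x2] [y1 y2] /=; split; last by case=> -> ->; rewrite !d_xx addr0.
  move=> h; have h1 := d_ge0 x1 y1; have h2 := d_ge0 x2 y2.
  have e1 : dist x1 y1 = 0 by lra.
  have e2 : dist x2 y2 = 0 by lra.
  by move/d_eq0: e1 => ->; move/d_eq0: e2 => ->.
- by move=> x y; rewrite d_sym [dist x.2 _]d_sym.
- move=> x y z; have := d_tri x.1 y.1 z.1; have := d_tri x.2 y.2 z.2; lra.
Qed.

Lemma dprod_cmpl : forall u, cauchy dprod u -> exists l, lim_to dprod u l.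
Proof.
move=> u hu.
have c1 : cauchy dist (fun n => (u n).1).
  move=> e e0; have [N HN] := hu e e0; exists N => m n hm hn.
  have := HN m n hm hn; rewrite /dprod; have := d_ge0 (u m).2 (u n).2; lra.
have c2 : cauchy dist (fun n => (u n).2).
  move=> e e0; have [N HN] := hu e e0; exists N => m n hm hn.
  have := HN m n hm hn; rewrite /dprod; have := d_ge0 (u m).1 (u n).1; lra.
have [l1 h1] := cmpl c1; have [l2 h2] := cmpl c2.
exists (l1, l2) => e e0.
have e20 : 0 < e / 2 by lra.
have [N1 H1] := h1 _ e20; have [N2 H2] := h2 _ e20.
exists (maxn N1 N2) => n hn; rewrite /dprod /=.
have := H1 n (leq_trans (leq_maxl _ _) hn); have := H2 n (leq_trans (leq_maxr _ _) hn); lra.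
Qed.

Lemma dprod_sep : exists en : nat -> P * Q, forall x (e : RR), 0 < e -> exists k, dprod x (en k) < e.
Proof.
have [e1 h1] := sep P; have [e2 h2] := sep Q.
exists (fun k => match unpickle k : option (nat * nat) with
                 | Some ab => (e1 ab.1, e2 ab.2) | None => (pt P, pt Q) end).
move=> [x1 x2] e e0; have e20 : 0 < e / 2 by lra.
have [k1 hk1] := h1 x1 _ e20; have [k2 hk2] := h2 x2 _ e20.
exists (pickle (k1, k2)); rewrite pickleK /dprod /=; lra.
Qed.

Definition prodP : PRec := @PRMk (P * Q)%type dprod dprod_met (pt P, pt Q) dprod_cmpl dprod_sep.

Lemma dprod_l (a b : prodP) : dist a.1 b.1 <= dist a b.
Proof. rewrite /= /dprod; have := d_ge0 a.2 b.2; lra. Qed.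
Lemma dprod_r (a b : prodP) : dist a.2 b.2 <= dist a b.
Proof. rewrite /= /dprod; have := d_ge0 a.1 b.1; lra. Qed.

Lemma mcont_fst : mcont (fun a : prodP => a.1).
Proof.
move=> x e e0; exists e => // y; rewrite /= /dprod; have := d_ge0 x.2 y.2; lra.
Qed.
Lemma mcont_snd : mcont (fun a : prodP => a.2).
Proof.
move=> x e e0; exists e => // y; rewrite /= /dprod; have := d_ge0 x.1 y.1; lra.
Qed.
End Prod.
Arguments dprod_l {P Q} a b.
Arguments dprod_r {P Q} a b.
Arguments mcont_fst {P Q}.
Arguments mcont_snd {P Q}.

Lemma mcont_pair (S P Q : PRec) (f : S -> P) (g : S -> Q) :
  mcont f -> mcont g -> mcont (fun s => (f s, g s) : prodP P Q).
Proof.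
move=> hf hg x e e0; have e20 : 0 < e / 2 by lra.
have [d1 d10 h1] := hf x _ e20; have [d2 d20 h2] := hg x _ e20.
exists (Num.min d1 d2); first by rewrite lt_min d10 d20.
move=> y; rewrite lt_min => /andP[/h1 a /h2 b]; rewrite /= /dprod /=; lra.
Qed.
Lemma minE_l {x y : RR} : x <= y -> Num.min x y = x.
Proof. by move=> h; apply/eqP; rewrite eq_le ge_min lexx /= le_min lexx h. Qed.
Lemma minE_r {x y : RR} : y <= x -> Num.min x y = y.
Proof. by move=> h; apply/eqP; rewrite eq_le ge_min lexx orbT /= le_min lexx h. Qed.
Lemma min1_tri (a b c : RR) : 0 <= b -> 0 <= c -> a <= b + c ->
  Num.min 1 a <= Num.min 1 b + Num.min 1 c.
Proof.
move=> hb hc habc.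
have ha : Num.min 1 a <= 1 by rewrite ge_min lexx.
have ha' : Num.min 1 a <= a by rewrite ge_min lexx orbT.
have hb0 : 0 <= Num.min 1 b by rewrite le_min ler01 hb.
have hc0 : 0 <= Num.min 1 c by rewrite le_min ler01 hc.
case: (leP 1 b) => hb1; first lra.
case: (leP 1 c) => hc1; lra.
Qed.

Lemma invS_gt0 (n : nat) : 0 < (n.+1%:R : RR)^-1.
Proof. by rewrite invr_gt0 ltr0Sn. Qed.
Lemma invS_le1 (n : nat) : (n.+1%:R : RR)^-1 <= 1.
Proof. by rewrite invf_le1 ?ltr0Sn // ler1n. Qed.
Lemma invS_anti (n m : nat) : (n <= m)%N -> (m.+1%:R : RR)^-1 <= n.+1%:R^-1.
Proof. by move=> h; rewrite lef_pV2 ?posrE ?ltr0Sn // ler_nat. Qed.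

Section Pi.
Variable P : nat -> PRec.
Definition Pt := forall n, P n.
Definition tm (p q : Pt) n : RR := Num.min 1 (dist (p n) (q n)) * (n.+1%:R)^-1.
Definition dpi (p q : Pt) : RR := sup (range (tm p q)).

Lemma tm_ge0 p q n : 0 <= tm p q n.
Proof. by rewrite /tm mulr_ge0 ?le_min ?ler01 ?d_ge0 // ltW // invS_gt0. Qed.

Lemma tm_le_inv p q n : tm p q n <= (n.+1%:R)^-1.
Proof.
rewrite /tm -[X in _ <= X]mul1r; apply: ler_wpM2r; [exact/ltW/invS_gt0 | by rewrite ge_min lexx].
Qed.

Lemma tm_le_d p q n : tm p q n <= dist (p n) (q n).
Proof.
rewrite /tm; have h0 : 0 <= Num.min 1 (dist (p n) (q n)) by rewrite le_min ler01 d_ge0.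
apply: (@le_trans _ _ (Num.min 1 (dist (p n) (q n)))); last by rewrite ge_min lexx orbT.
rewrite -[X in _ <= X]mulr1 ler_wpM2l //; exact: invS_le1.
Qed.

Lemma tm_ub p q : has_ubound (range (tm p q)).
Proof.
exists 1 => y [n _ <-]; apply: le_trans (tm_le_inv p q n) _; exact: invS_le1.
Qed.

Lemma tm_le_dpi p q n : tm p q n <= dpi p q.
Proof. by apply: (ub_le_sup (tm_ub p q)); exists n. Qed.

Lemma dpi_le p q c : (forall n, tm p q n <= c) -> dpi p q <= c.
Proof.
move=> h; apply: ge_sup; first by exists (tm p q 0); exists 0%N.
by move=> y [n _ <-].
Qed.

Lemma dpi_met : is_metric dpi.
Proof.
split.
- by move=> p q; apply: le_trans (tm_le_dpi p q 0); exact: tm_ge0.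
- move=> p q; split => [h|->]; last first.
    apply/eqP; rewrite eq_le; apply/andP; split; last by apply: le_trans (tm_le_dpi q q 0); exact: tm_ge0.
    by apply: dpi_le => n; rewrite /tm d_xx (minE_r ler01) mul0r.
  apply: functional_extensionality_dep => n; apply/d_eq0.
  have hd := d_ge0 (p n) (q n).
  case: (ltP 0 (dist (p n) (q n))) => hp; last by apply/eqP; rewrite eq_le hp hd.
  have : 0 < tm p q n by rewrite /tm mulr_gt0 ?invS_gt0 // lt_min ltr01 hp.
  have := tm_le_dpi p q n; rewrite h; lra.
- move=> p q; rewrite /dpi; congr sup; apply/funext => x /=.
  apply/propext; split => -[n _ <-]; exists n => //; by rewrite /tm d_sym.
- move=> p q r; apply: dpi_le => n.
  apply: le_trans (lerD (tm_le_dpi p q n) (tm_le_dpi q r n)).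
  rewrite /tm -mulrDl; apply: ler_wpM2r; first exact/ltW/invS_gt0.
  apply: min1_tri; [exact: d_ge0|exact: d_ge0|exact: d_tri].
Qed.

Lemma rpos {e : RR} (n : nat) : 0 < e -> 0 < Num.min e 1 / n.+1%:R.
Proof. by move=> e0; rewrite mulr_gt0 ?invS_gt0 // lt_min e0 ltr01. Qed.

Lemma proj_close (p q : Pt) n (e : RR) : 0 < e ->
  dpi p q < Num.min e 1 / n.+1%:R -> dist (p n) (q n) < e.
Proof.
move=> e0 h; have h1 := le_lt_trans (tm_le_dpi p q n) h.
move: h1; rewrite /tm ltr_pM2r ?invS_gt0 // => h1.
have hm : Num.min e 1 <= e by rewrite ge_min lexx.
have hm1 : Num.min e 1 <= 1 by rewrite ge_min lexx orbT.
case: (leP 1 (dist (p n) (q n))) => hd.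
  by move: h1; rewrite (minE_l hd); lra.
by move: h1; rewrite (minE_r (ltW hd)); lra.
Qed.

Lemma dpi_small {p q : Pt} {e : RR} {N0} : N0.+1%:R^-1 < e ->
  (forall n, (n < N0)%N -> dist (p n) (q n) < e) -> dpi p q <= e.
Proof.
move=> hN h; apply: dpi_le => n; case: (ltnP n N0) => hn.
  exact/ltW/(le_lt_trans (tm_le_d p q n))/h.
apply/ltW/(le_lt_trans (tm_le_inv p q n))/(le_lt_trans _ hN); exact: invS_anti.
Qed.

Lemma dpi_cmpl : forall u, cauchy dpi u -> exists l, lim_to dpi u l.
Proof.
move=> u hu.
have c : forall n, cauchy dist (fun m => u m n).
  move=> n e e0; have [N HN] := hu _ (rpos n e0); exists N => m k hm hk.
  exact: proj_close (HN m k hm hk).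
pose l : Pt := fun n => sval (cid (cmpl (c n))).
have hl : forall n, lim_to dist (fun m => u m n) (l n) := fun n => svalP (cid (cmpl (c n))).
exists l => e e0; have e20 : 0 < e / 2 by lra.
have [N0 hN0] := archi e20.
pose M := fun n => sval (cid (hl n _ e20)).
have hM : forall n m, (M n <= m)%N -> dist (u m n) (l n) < e / 2 := fun n => svalP (cid (hl n _ e20)).
exists (\max_(i < N0) M i) => m hm.
apply: le_lt_trans (dpi_small hN0 _) _; last by lra.
move=> n hn; apply: hM; apply: leq_trans hm.
by have := @leq_bigmax _ (fun i : 'I_N0 => M (nat_of_ord i)) (Ordinal hn).
Qed.

Lemma dpi_sep : exists en : nat -> Pt, forall x (e : RR), 0 < e -> exists k, dpi x (en k) < e.
Proof.
pose E := fun n => sval (cid (sep (P n))).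
have hE : forall n x (e : RR), 0 < e -> exists k, dist x (E n k) < e := fun n => svalP (cid (sep (P n))).
exists (fun k => match unpickle k : option (seq nat) with
  | Some s => fun n => if (n < size s)%N then E n (nth 0%N s n) else pt (P n)
  | None => fun n => pt (P n) end).
move=> x e e0; have e20 : 0 < e / 2 by lra.
have [N0 hN0] := archi e20.
pose K := fun n => sval (cid (hE n (x n) _ e20)).
have hK : forall n, dist (x n) (E n (K n)) < e / 2 := fun n => svalP (cid (hE n (x n) _ e20)).
exists (pickle (mkseq K N0)); rewrite pickleK.
apply: le_lt_trans (dpi_small hN0 _) _; last by lra.
by move=> n hn /=; rewrite size_mkseq hn nth_mkseq.
Qed.

Definition piP : PRec := @PRMk Pt dpi dpi_met (fun n => pt (P n)) dpi_cmpl dpi_sep.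

Lemma mcont_proj n : mcont (fun p : piP => p n).
Proof.
move=> x e e0; exists (Num.min e 1 / n.+1%:R); first exact: rpos n e0.
move=> y; exact: proj_close.
Qed.
End Pi.
Definition upd (T : nat -> Type) (p : forall n, T n) k (c : T k) : forall n, T n :=
  fun n => match PeanoNat.Nat.eq_dec k n with left e => eq_rect k T c n e | right _ => p n end.

Arguments upd {T} p {k} c.

Lemma upd_at (T : nat -> Type) (p : forall n, T n) k (c : T k) : upd p c k = c.
Proof.
rewrite /upd; case: PeanoNat.Nat.eq_dec => // e.
by rewrite (eq_irrelevance e (erefl k)).
Qed.

Section Witness.
Variables (X : PRec) (A : nat -> set X).
Hypothesis hA : forall n, an (A n) /\ A n !=set0.

Let w n : {P : PRec & {C : set P & {f : P -> X | [/\ mclosed C, mcont f, f @` C = A n & C !=set0]}}}.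
Proof.
have [h1 h2] := hA n.
have /cid [P /cid [C /cid [f h]]] := an_ne h1 h2.
exact: (existT _ P (existT _ C (exist _ f h))).
Defined.

Definition wP n : PRec := projT1 (w n).
Definition wC n : set (wP n) := projT1 (projT2 (w n)).
Definition wf n : wP n -> X := sval (projT2 (projT2 (w n))).
Lemma wprop n : [/\ mclosed (wC n), mcont (wf n), wf n @` wC n = A n & wC n !=set0].
Proof. exact: (svalP (projT2 (projT2 (w n)))). Qed.
End Witness.
Arguments wP {X A} hA n.
Arguments wC {X A} hA n.
Arguments wf {X A} hA n.
Arguments wprop {X A} hA n.

Lemma an_bigcup_ne (X : PRec) (A : nat -> set X) :
  (forall n, an (A n) /\ A n !=set0) -> an (\bigcup_n A n).
Proof.
move=> hA.
pose Y := prodP natP (piP (wP hA)).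
exists Y, [set kp : Y | wC hA kp.1 (kp.2 kp.1)], (fun kp : Y => wf hA kp.1 (kp.2 kp.1)).
split.
- move=> [k p] /= hk.
  have [hc _ _ _] := wprop hA k.
  have [r r0 hr] := hc (p k) hk.
  exists (Num.min 1 (Num.min r 1 / k.+1%:R)); first by rewrite lt_min ltr01 rpos.
  move=> [k' q]; rewrite lt_min => /andP[h1 h2] /=.
  have hk1 := le_lt_trans (dprod_l (k, p) (k', q) : _ <= _) h1.
  have h3 := le_lt_trans (dprod_r (k, p) (k', q) : _ <= _) h2.
  have ek : k = k' := dnat_lt1 hk1; move: q h3 {h1 h2 hk1}; rewrite -ek => q h3.
  apply: hr; exact: (@proj_close (wP hA) p q k r r0 h3).
- move=> [k p] e e0 /=.
  have [_ hf _ _] := wprop hA k.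
  have [d d0 hd] := hf (p k) e e0.
  exists (Num.min 1 (Num.min d 1 / k.+1%:R)); first by rewrite lt_min ltr01 rpos.
  move=> [k' q]; rewrite lt_min => /andP[h1 h2] /=.
  have hk1 := le_lt_trans (dprod_l (k, p) (k', q) : _ <= _) h1.
  have h3 := le_lt_trans (dprod_r (k, p) (k', q) : _ <= _) h2.
  have ek : k = k' := dnat_lt1 hk1; move: q h3 {h1 h2 hk1}; rewrite -ek => q h3.
  apply: hd; exact: (@proj_close (wP hA) p q k d d0 h3).
- apply/funext => x /=; apply/propext; split.
    move=> [[k p] /= hk <-]; exists k => //.
    have [_ _ <- _] := wprop hA k; by exists (p k).
  move=> [k _]; have [_ _ <- _] := wprop hA k; move=> [c hc <-].
  exists ((k : natP), (upd (fun n => pt (wP hA n)) c : piP (wP hA))) => /=; by rewrite upd_at.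
Qed.

Lemma an_bigcup (X : PRec) (A : nat -> set X) :
  (forall n, an (A n)) -> an (\bigcup_n A n).
Proof.
move=> hA; case: (pselect (exists k, A k !=set0)) => [[k0 hk0]|hne]; last first.
  have -> : \bigcup_n A n = set0.
    apply/funext => x; apply/propext; split => // -[k _ hk]; apply: hne; exists k; by exists x.
  exact: an0.
pose A' n := if pselect (A n !=set0) then A n else A k0.
have hA' : forall n, an (A' n) /\ A' n !=set0.
  by move=> n; rewrite /A'; case: pselect => /= h; split => //; exact: hA.
have -> : \bigcup_n A n = \bigcup_n A' n.
  apply/funext => x; apply/propext; split.
    move=> [k _ hk]; exists k => //; rewrite /A'; case: pselect => //= -[]; by exists x.
  move=> [k _]; rewrite /A'; case: pselect => /= _ h; [by exists k | by exists k0].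
exact: an_bigcup_ne.
Qed.

Lemma an_bigcap (X : PRec) (A : nat -> set X) :
  (forall n, an (A n)) -> an (\bigcap_n A n).
Proof.
move=> hA0; case: (pselect (forall k, A k !=set0)) => hne; last first.
  have -> : \bigcap_n A n = set0.
    apply/funext => x; apply/propext; split => // hx; apply: hne => k; exists x; exact: hx.
  exact: an0.
have hA : forall n, an (A n) /\ A n !=set0 by [].
pose Y := piP (wP hA).
exists Y, [set p : Y | forall n, wC hA n (p n) /\ wf hA n (p n) = wf hA 0%N (p 0%N)],
  (fun p : Y => wf hA 0%N (p 0%N)).
split.
- move=> p /= /existsNP [n /not_andP hn].
  case: hn => hn.
    have [hc _ _ _] := wprop hA n.
    have [r r0 hr] := hc (p n) hn.
    exists (Num.min r 1 / n.+1%:R); first exact: rpos.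
    move=> q hq hall; have [hq1 _] := hall n; apply: (hr (q n)) => //.
    exact: (@proj_close (wP hA)).
  have [_ hfn _ _] := wprop hA n; have [_ hf0 _ _] := wprop hA 0%N.
  set r := dist (wf hA n (p n)) (wf hA 0%N (p 0%N)).
  have r0 : 0 < r.
    rewrite lt_def d_ge0 andbT; apply/eqP => /d_eq0; exact: hn.
  have r20 : 0 < r / 2 by lra.
  have [d1 d10 hd1] := hfn (p n) _ r20; have [d0 d00 hd0] := hf0 (p 0%N) _ r20.
  exists (Num.min (Num.min d1 1 / n.+1%:R) (Num.min d0 1 / 0.+1%:R)).
    by rewrite lt_min !rpos.
  move=> q; rewrite lt_min => /andP[h1 h2] hall; have [_ heq] := hall n.
  have a1 := hd1 _ (@proj_close (wP hA) _ _ _ _ d10 h1).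
  have a0 := hd0 _ (@proj_close (wP hA) _ _ _ _ d00 h2).
  have t := d_tri (wf hA n (p n)) (wf hA n (q n)) (wf hA 0%N (p 0%N)).
  have e2 : dist (wf hA n (q n)) (wf hA 0%N (p 0%N)) = dist (wf hA 0%N (p 0%N)) (wf hA 0%N (q 0%N)).
    by rewrite heq d_sym.
  move: t; rewrite e2 -/r; lra.
- apply: mcont_comp; [exact: (mcont_proj (wP hA) 0%N) | by have [] := wprop hA 0%N].
- apply/funext => x /=; apply/propext; split.
    move=> [p /= hp <-] n _; have [_ _ <- _] := wprop hA n.
    have [h1 h2] := hp n; exists (p n) => //.
  move=> hx.
  have hc : forall n, exists c, wC hA n c /\ wf hA n c = x.
    move=> n; have [_ _ hi _] := wprop hA n; have := hx n I; rewrite -hi => -[c ? ?].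
    by exists c.
  pose p : Y := fun n => sval (cid (hc n)).
  have hp : forall n, wC hA n (p n) /\ wf hA n (p n) = x := fun n => svalP (cid (hc n)).
  exists p; last by have [] := hp 0%N.
  move=> n; have [a b] := hp n; split => //; rewrite b; by have [] := hp 0%N.
Qed.

Definition iS (n : nat) : RR := n.+1%:R^-1.
Lemma iS_gt0 n : 0 < iS n. Proof. exact: invS_gt0. Qed.

Lemma open_an (X : PRec) (U : set X) : mopen U -> an U.
Proof.
move=> hU.
pose K n := [set x : X | forall y, ~ U y -> iS n <= dist x y].
have -> : U = \bigcup_n K n.
  apply/funext => x; apply/propext; split.
    move=> Ux; have [e e0 he] := hU x Ux; have [N hN] := archi e0.
    have hN' : iS N < e := hN.
    exists N => // y nUy; case: (leP (iS N) (dist x y)) => // h.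
    exfalso; apply: nUy; apply: he; lra.
  move=> [n _ hn]; apply: contrapT => nUx; have := hn x nUx.
  rewrite d_xx; have := iS_gt0 n; lra.
apply: an_bigcup => n; apply: closed_an.
move=> x /existsNP [y /not_implyP [nUy hy]].
have hy' : dist x y < iS n by rewrite ltNge; apply/negP.
exists (iS n - dist x y); first lra.
move=> z hz Kz; have := Kz y nUy; have := d_tri z x y; rewrite (d_sym z x); lra.
Qed.

Lemma borel_an (X : PRec) (A : set X) : mborel A -> an A /\ an (~` A).
Proof.
move=> hA; apply: (smallest_sub (X := [set B | an B /\ an (~` B)])) hA; last first.
  move=> U hU; split; first exact: open_an.
  by apply: closed_an; rewrite /mclosed setCK.
split.
- by split; [exact: an0 | rewrite setC0; exact: anT].
- move=> B [h1 h2]; rewrite setTD; split => //; by rewrite setCK.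
- move=> B hB; split; first by apply: an_bigcup => n; have [] := hB n.
  rewrite setC_bigcup; apply: an_bigcap => n; by have [] := hB n.
Qed.
Definition ptop (P : PRec) : Type := car P.
HB.instance Definition _ (P : PRec) := gen_eqMixin (ptop P).
HB.instance Definition _ (P : PRec) := gen_choiceMixin (ptop P).

Lemma ptop_xx (P : PRec) (x : ptop P) : @dist P x x = 0. Proof. exact: d_xx. Qed.
Lemma ptop_pos (P : PRec) (x y : ptop P) : @dist P x y = 0 -> x = y. Proof. by move/d_eq0. Qed.
Lemma ptop_sym (P : PRec) (x y : ptop P) : @dist P x y = @dist P y x. Proof. exact: d_sym. Qed.
Lemma ptop_tri (P : PRec) (y x z : ptop P) : @dist P x z <= @dist P x y + @dist P y z.
Proof. exact: d_tri. Qed.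

HB.instance Definition _ (P : PRec) :=
  @isMetric.Build RR (ptop P) (@dist P) (@ptop_xx P) (@ptop_pos P) (@ptop_sym P) (@ptop_tri P).

Lemma ptop_nbhs (P : PRec) (x : ptop P) (A : set (ptop P)) :
  nbhs x A <-> exists2 e : RR, 0 < e & forall y, @dist P x y < e -> A y.
Proof.
rewrite nbhs_ballP /nbhs_ball /nbhs_ball_ /filter_from /=.
split => -[e e0 he]; exists e => //.
Qed.

Lemma ptop_open (P : PRec) (A : set (ptop P)) :
  open A <-> (forall x, A x -> exists2 e : RR, 0 < e & [set y | @dist P x y < e] `<=` A).
Proof.
rewrite openE; split => h x Ax.
  have := h x Ax; rewrite /interior => /ptop_nbhs [e e0 he]; by exists e.
by rewrite /interior; apply/ptop_nbhs; have [e e0 he] := h x Ax; exists e.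
Qed.

Lemma ptop_polish (P : PRec) : polish (ptop P).
Proof.
have [en hen] := sep P.
split.
  exists (range en); split; first exact: card_image_le.
  move=> O [x Ox] oO; have /ptop_nbhs [e e0 he] : nbhs x O.
    by apply: open_nbhs_nbhs; split.
  have [k hk] := hen x e e0; exists (en k); split; [exact: he | by exists k].
exists (@dist P); split.
- exact: dist_met.
- move=> A; exact: ptop_open.
- move=> u hu; have [l hl] := cmpl hu; exists l.
  move=> O /ptop_nbhs [e e0 he]; have [N hN] := hl e e0.
  exists N => // n /= hn; apply: he; rewrite d_sym; exact: hN.
Qed.

Definition metric_nbhs (T : topologicalType) (d : T -> T -> RR) :=
  forall x (A : set T), nbhs x A <-> exists2 e : RR, 0 < e & forall y, d x y < e -> A y.

Lemma polish_data {T : topologicalType} (x0 : T) : polish T ->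
  exists d : T -> T -> RR, [/\ is_metric d, @metric_nbhs T d,
    (forall u, cauchy d u -> exists l, lim_to d u l) &
    exists en : nat -> T, forall x (e : RR), 0 < e -> exists k, d x (en k) < e].
Proof.
move=> [[D [cD dD]] [d [md hind hcomp]]].
have [d0 d00 dsym dtri] := md.
have hnb : @metric_nbhs T d.
  move=> x A; split.
    rewrite nbhsE => -[B [oB Bx] BA].
    have [e e0 he] := (hind B).1 oB x Bx; exists e => // y hy; exact/BA/he.
  move=> [e e0 he]; pose B := [set y | d x y < e].
  have oB : open B.
    apply/hind => y By; exists (e - d x y); first by rewrite /B /= in By; lra.
    move=> z /= hz; rewrite /B /=; have := dtri x y z; lra.
  apply: (@filterS _ _ _ B); first by move=> y /he.
  apply: open_nbhs_nbhs; split => //; rewrite /B /=.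
  by have -> : d x x = 0 by apply/d00.
exists d; split => //.
- move=> u hu; have [l hl] := hcomp u hu; exists l => e e0.
  have : nbhs l [set y | d l y < e] by apply/hnb; exists e.
  move=> /hl [N _ hN]; exists N => n hn; rewrite dsym; exact: hN.
- move/countable_injP: cD => [f hf].
  have [s hs] : {s : nat -> T & forall n, (exists x, D x /\ f x = n) -> D (s n) /\ f (s n) = n}.
    apply: (boolp.choice (P := fun n (y : T) => (exists x, D x /\ f x = n) -> D y /\ f y = n)) => n; case: (pselect (exists x, D x /\ f x = n)) => [[x hx]|nx].
      by exists x.
    by exists x0.
  exists s => x e e0.
  have [y [hy Dy]] : [set z | d x z < e] `&` D !=set0.
    apply: dD; first by exists x; rewrite /= (_ : d x x = 0) //; exact/d00.
    apply/hind => y /= hy; exists (e - d x y); first lra.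
    move=> z /= hz; have := dtri x y z; lra.
  exists (f y); have [Ds fs] := hs (f y) (ex_intro _ y (conj Dy erefl)).
  have -> : s (f y) = y by apply: hf; rewrite ?inE.
  exact: hy.
Qed.

Definition TP {T : topologicalType} (x0 : T) (h : polish T) : PRec :=
  let w := cid (polish_data x0 h) in
  @PRMk T (sval w) (let: And4 a _ _ _ := svalP w in a) x0
     (let: And4 _ _ c _ := svalP w in c) (let: And4 _ _ _ d := svalP w in d).

Lemma TP_nbhs (T : topologicalType) (x0 : T) (h : polish T) :
  @metric_nbhs T (@dist (TP x0 h)).
Proof. rewrite /TP /=; by case: (svalP (cid (polish_data x0 h))). Qed.

Definition mcontT {Y : PRec} {T : topologicalType} (h : Y -> T) :=
  forall y (O : set T), nbhs (h y) O -> exists2 e : RR, 0 < e & forall z, dist y z < e -> O (h z).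

Lemma mcontT_comp (P Q : PRec) (T : topologicalType) (f : P -> Q) (h : Q -> T) :
  mcont f -> mcontT h -> mcontT (h \o f).
Proof.
move=> hf hh y O /hh [e e0 he]; have [d d0 hd] := hf y e e0.
by exists d => // z /hd /he.
Qed.

Lemma mcontT_cont (Y : PRec) (T T' : topologicalType) (h : Y -> T) (g : T -> T') :
  mcontT h -> continuous g -> mcontT (g \o h).
Proof.
move=> hh hg y O hO; have := hg (h y) O hO => /hh [e e0 he]; by exists e.
Qed.

Lemma mcontT_pair (Y : PRec) (T1 T2 : topologicalType) (h1 : Y -> T1) (h2 : Y -> T2) :
  mcontT h1 -> mcontT h2 -> mcontT (fun y => (h1 y, h2 y)).
Proof.
move=> k1 k2 y O [[U V] [/= hU hV] hUV].
have [e1 e10 he1] := k1 y U hU; have [e2 e20 he2] := k2 y V hV.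
exists (Num.min e1 e2); first by rewrite lt_min e10 e20.
move=> z; rewrite lt_min => /andP[a b]; apply: hUV; split; [exact: he1 | exact: he2].
Qed.

Lemma mcontT_TP (T : topologicalType) (x0 : T) (h : polish T) :
  mcontT (fun x : TP x0 h => (x : T)).
Proof. by move=> y O /(@TP_nbhs T x0 h y O). Qed.

Lemma mcontT_cst (Y : PRec) (T : topologicalType) (c : T) : mcontT (fun _ : Y => c).
Proof. by move=> y O hO; exists 1 => // z _; exact: nbhs_singleton. Qed.

Lemma mborelC (X : PRec) (A : set X) : mborel A -> mborel (~` A).
Proof. by move=> h; rewrite -setTD; apply: sigma_algebraCD. Qed.

Lemma mborelU (X : PRec) (A : nat -> set X) : (forall n, mborel (A n)) -> mborel (\bigcup_n A n).
Proof. move=> h; exact: sigma_algebra_bigcup. Qed.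

Lemma mborelI2 (X : PRec) (A B : set X) : mborel A -> mborel B -> mborel (A `&` B).
Proof.
move=> hA hB; rewrite -[A `&` B]setCK setCI.
apply: mborelC; have -> : ~` A `|` ~` B = \bigcup_n (if n is 0%N then ~` A else ~` B).
  apply/funext => x; apply/propext; split.
    by case => h; [exists 0%N | exists 1%N].
  by move=> [[|n] _ h]; [left | right].
by apply: mborelU => -[|n]; apply: mborelC.
Qed.

Lemma mopen_borel (X : PRec) (A : set X) : mopen A -> mborel A.
Proof. by move=> h; apply: sub_sigma_algebra. Qed.

Lemma pre_borel (Y : PRec) (T : topologicalType) (h : Y -> T) :
  mcontT h -> forall B, borel B -> mborel (h @^-1` B).
Proof.
move=> hh B hB; apply: (smallest_sub (X := [set B | mborel (h @^-1` B)])) hB; last first.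
  move=> O oO; apply: mopen_borel => y Oy.
  have [e e0 he] := hh y O (open_nbhs_nbhs (conj oO Oy)); by exists e.
split.
- by rewrite /= preimage_set0; exact: sigma_algebra0.
- by move=> A hA; rewrite /= setTD preimage_setC; apply: mborelC.
- by move=> A hA; rewrite /= preimage_bigcup; apply: mborelU.
Qed.

Section Sub.
Variables (P : PRec) (C : set P) (c0 : P) (hc0 : C c0) (hC : mclosed C).
Definition St := {x : car P | C x}.
Definition dS (a b : St) : RR := dist (sval a) (sval b).

Lemma dS_met : is_metric dS.
Proof.
rewrite /dS; split.
- by move=> ? ?; exact: d_ge0.
- move=> [a ha] [b hb] /=; split; last by case=> ->; exact: d_xx.
  move/d_eq0 => e; move: ha hb; rewrite e => ha hb; congr exist; exact: Prop_irrelevance.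
- by move=> ? ?; exact: d_sym.
- by move=> ? ? ?; exact: d_tri.
Qed.

Lemma dS_cmpl : forall u, cauchy dS u -> exists l, lim_to dS u l.
Proof.
move=> u hu.
have hv : cauchy dist (fun n => sval (u n)) by [].
have [l hl] := cmpl hv.
have Cl : C l.
  apply: contrapT => nl; have [r r0 hr] := hC l nl.
  have [N hN] := hl r r0; apply: (hr (sval (u N))); first by rewrite d_sym; exact: hN.
  exact: svalP.
by exists (exist _ l Cl).
Qed.

Lemma dS_sep : exists en : nat -> St, forall x (e : RR), 0 < e -> exists k, dS x (en k) < e.
Proof.
have [en hen] := sep P.
have [g hg] : {g : nat -> St & forall j k m, unpickle j = Some (k, m) ->
    (exists c, C c /\ dist (en k) c < iS m) -> dist (en k) (sval (g j)) < iS m}.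
  apply: (boolp.choice (P := fun j (c : St) => forall k m, unpickle j = Some (k, m) ->
    (exists c, C c /\ dist (en k) c < iS m) -> dist (en k) (sval c) < iS m)) => j.
  case hj : (unpickle j : option (nat * nat)) => [[k m]|]; last first.
    by exists (exist _ c0 hc0).
  case: (pselect (exists c, C c /\ dist (en k) c < iS m)) => [[c [Cc hc]]|nc].
    by exists (exist _ c Cc) => k' m' [<- <-].
  by exists (exist _ c0 hc0) => k' m' [<- <-].
exists g => x e e0; have e20 : 0 < e / 2 by lra.
have [m hm] := archi e20; have hm' : iS m < e / 2 := hm.
have [k hk] := hen (sval x) (iS m) (iS_gt0 m).
have h1 := hg (pickle (k, m)) k m (pickleK _).
have h2 : dist (en k) (sval (g (pickle (k, m)))) < iS m.
  by apply: h1; exists (sval x); split; [exact: svalP | rewrite d_sym].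
exists (pickle (k, m)); rewrite /dS; have := d_tri (sval x) (en k) (sval (g (pickle (k, m)))).
lra.
Qed.

Definition subP : PRec := @PRMk St dS dS_met (exist _ c0 hc0) dS_cmpl dS_sep.
End Sub.
Arguments subP {P C c0} hc0 hC.
Arguments St {P} C.

Lemma an_analytic (Y : PRec) (Z : set Y) (T : topologicalType) (h : Y -> T) :
  an Z -> mcontT h -> analytic (h @` Z).
Proof.
move=> [P [C [f [hC hf <-]]]] hh.
case: (pselect (C !=set0)) => [[c0 hc0]|nC]; last first.
  left; apply/funext => t; apply/propext; split => // -[y [c Cc _] _].
  by apply: nC; exists c.
right; exists (ptop (subP hc0 hC)), (fun q : ptop (subP hc0 hC) => h (f (sval (q : St C)))).
split.
- exact: ptop_polish.
- move=> x O hO; apply/ptop_nbhs.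
  have [e e0 he] := hh _ O hO; have [d d0 hd] := hf (sval (x : St C)) e e0.
  by exists d => // y /hd /he.
- apply/funext => t; apply/propext; split.
    by move=> [q _ <-]; exists (f (sval (q : St C))) => //; exists (sval (q : St C)) => //; exact: svalP.
  move=> [y [c Cc <-] <-]; by exists (exist _ c Cc : ptop (subP hc0 hC)).
Qed.

Definition Good {T : topologicalType} {Pp : PRec} (p : Pp -> T) (en : nat -> Pp)
  k m k' m' (A B : set T) :=
  [/\ open A, open B, A `&` B = set0,
      (forall z, dist (en k) z < iS m -> A (p z)) &
      (forall z, dist (en k') z < iS m' -> B (p z))].

Lemma hsep (T : topologicalType) (Pp : PRec) (p : Pp -> T) :
  hausdorff_space T -> mcontT p -> (forall x : T, exists u, p u = x) ->
  exists O O' : nat -> set T, (forall n, [/\ open (O n), open (O' n) & O n `&` O' n = set0]) /\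
    forall x y, x <> y -> exists n, O n x /\ O' n y.
Proof.
move=> hT hp sp; have [en hen] := sep Pp.
have [g hg] : {g : nat -> set T * set T & forall j,
   [/\ open (g j).1, open (g j).2, (g j).1 `&` (g j).2 = set0 &
     forall k m k' m', unpickle j = Some ((k, m), (k', m')) ->
       (exists A B, Good p en k m k' m' A B) -> Good p en k m k' m' (g j).1 (g j).2]}.
  apply: (boolp.choice (P := fun j (AB : set T * set T) =>
    [/\ open AB.1, open AB.2, AB.1 `&` AB.2 = set0 &
     forall k m k' m', unpickle j = Some ((k, m), (k', m')) ->
       (exists A B, Good p en k m k' m' A B) -> Good p en k m k' m' AB.1 AB.2])) => j.
  have d0 : [/\ open (@set0 T), open (@set0 T) & (@set0 T) `&` set0 = set0].
    by split; [exact: open0 | exact: open0 | exact: set0I].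
  case hj : (unpickle j : option ((nat * nat) * (nat * nat))) => [[[k m] [k' m']]|]; last first.
    by exists (set0, set0); case: d0 => *; split.
  case: (pselect (exists A B, Good p en k m k' m' A B)) => [[A [B hAB]]|nAB].
    exists (A, B); case: (hAB) => *; split => // k1 m1 k1' m1' [<- <- <- <-] _ //.
  exists (set0, set0); case: d0 => *; split => // k1 m1 k1' m1' [<- <- <- <-] //.
exists (fun n => (g n).1), (fun n => (g n).2); split.
  by move=> n; case: (hg n).
move=> x y nxy.
have [u pu] := sp x; have [u' pu'] := sp y.
have : ~ cluster (nbhs x) y by move=> /hT; exact: nxy.
move=> /existsNP [A /existsNP [B /not_implyP [nA /not_implyP [nB nAB]]]].
move: nA nB; rewrite !nbhsE => -[A0 [oA0 A0x] A0A] [B0 [oB0 B0y] B0B].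
have dAB : A0 `&` B0 = set0.
  apply/funext => z; apply/propext; split => // -[/A0A az /B0B bz]; apply: nAB; by exists z.
have [e e0 he] := hp u A0 (open_nbhs_nbhs (conj oA0 (eq_ind_r A0 A0x pu))).
have [e' e0' he'] := hp u' B0 (open_nbhs_nbhs (conj oB0 (eq_ind_r B0 B0y pu'))).
have e20 : 0 < e / 2 by lra.
have e20' : 0 < e' / 2 by lra.
have [m hm] := archi e20; have hm' : iS m < e / 2 := hm.
have [m' hm2] := archi e20'; have hm2' : iS m' < e' / 2 := hm2.
have [k hk] := hen u (iS m) (iS_gt0 m); have [k' hk'] := hen u' (iS m') (iS_gt0 m').
have G : Good p en k m k' m' A0 B0.
  split => // z hz.
    by apply: he; have := d_tri u (en k) z; lra.
  by apply: he'; have := d_tri u' (en k') z; lra.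
have [_ _ _ hj] := hg (pickle ((k, m), (k', m'))).
have [_ _ _ G1 G2] := hj k m k' m' (pickleK _) (ex_intro _ A0 (ex_intro _ B0 G)).
exists (pickle ((k, m), (k', m'))); split.
  by rewrite -pu; apply: G1; rewrite d_sym.
by rewrite -pu'; apply: G2; rewrite d_sym.
Qed.

Lemma graph_borel (Y : PRec) (T : topologicalType) (a b : Y -> T) (O O' : nat -> set T) :
  (forall n, [/\ open (O n), open (O' n) & O n `&` O' n = set0]) ->
  (forall x y, x <> y -> exists n, O n x /\ O' n y) ->
  (forall U, open U -> mborel (a @^-1` U)) -> mcontT b ->
  mborel [set y | a y = b y].
Proof.
move=> hO hsepO ha hb.
have -> : [set y | a y = b y] = ~` \bigcup_n (a @^-1` O n `&` b @^-1` O' n).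
  apply/funext => y; apply/propext; split.
    move=> e [n _ [h1 h2]]; have [_ _ hd] := hO n.
    have : (O n `&` O' n) (a y) by split => //; rewrite e.
    by rewrite hd.
  move=> h; apply: contrapT => ne; have [n [h1 h2]] := hsepO _ _ ne.
  by apply: h; exists n.
apply: mborelC; apply: mborelU => n; have [o1 o2 _] := hO n.
apply: mborelI2; first exact: ha.
apply: (@pre_borel Y T b hb); exact: sub_sigma_algebra.
Qed.

Arguments an_analytic {Y Z T h}.
Arguments hsep {T Pp p}.
Arguments graph_borel {Y T a b O O'}.
Arguments borel_an {X A}.
Arguments mcontT_comp {P Q T f h}.
Arguments mcontT_cont {Y T T' h g}.
Arguments mcontT_pair {Y T1 T2 h1 h2}.
Arguments mcontT_TP {T x0}.
Arguments mcont_comp {P Q S f g}.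
Lemma singleton_analytic (T : topologicalType) (x : T) : analytic [set x].
Proof.
have hZ : an (X := natP) [set 0%N].
  apply: closed_an => n /= hn; exists 1; first exact: ltr01.
  by move=> m /dnat_lt1 <-.
have := an_analytic hZ (@mcontT_cst natP T x).
by rewrite image_set1.
Qed.

Lemma const_in_DP (F R : topologicalType) (leF : F -> F -> Prop) (leR : R -> R -> Prop)
  (x : F * R) : in_DP leF leR (const_DP leF leR x).
Proof.
exists [set x]; split; first exact: singleton_analytic.
apply/funext => y; apply/propext; split.
  by move=> h; exists x.
by move=> [a -> h].
Qed.

Theorem theorem6 (Omega F R : topologicalType)
    (leF : F -> F -> Prop) (leR : R -> R -> Prop) :
  polish Omega ->
  souslin F -> souslin R ->
  partial_order leF -> partial_order leR ->
  borel_order leF -> borel_order leR ->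
  (forall x : F * R, in_DP leF leR (const_DP leF leR x)) /\
  quasi_measurable_to_DP Omega leF leR (const_DP leF leR).
Proof.
move=> hOm [hausF anF] [hausR anR] _ _ boF boR.
split; first by move=> x; exact: const_in_DP.
move=> alpha [ha1 ha2]; split; first by move=> w; exact: const_in_DP.
set S := feasible _.
case: (pselect (S !=set0)) => [[[[w0 y1] y2] hS]|nS]; last first.
  left; apply/funext => p; apply/propext; split => // Sp; apply: nS; by exists p.
case: anF => [eF|[PF [pF [polF cF imF]]]].
  by have : (@setT F) y1 by []; rewrite eF.
case: anR => [eR|[PR [pR [polR cR imR]]]].
  by have : (@setT R) y2 by []; rewrite eR.
have sF : forall y : F, exists u, pF u = y.
  by move=> y; have : (@setT F) y by []; rewrite -imF => -[u _ <-]; exists u.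
have sR : forall y : R, exists u, pR u = y.
  by move=> y; have : (@setT R) y by []; rewrite -imR => -[u _ <-]; exists u.
have [u0 _] := sF y1; have [v0 _] := sR y2.
pose OmP := TP w0 hOm; pose PFP := TP u0 polF; pose PRP := TP v0 polR.
pose Y := prodP OmP (prodP (prodP PFP PFP) (prodP PRP PRP)).
pose a1 := fun w : Omega => (alpha w).1.
pose a2 := fun w : Omega => (alpha w).2.
pose pw := fun y : Y => (y.1 : Omega).
pose pu := fun y : Y => (y.2.1.1 : PF).
pose pu' := fun y : Y => (y.2.1.2 : PF).
pose pv := fun y : Y => (y.2.2.1 : PR).
pose pv' := fun y : Y => (y.2.2.2 : PR).
pose Z := [set y : Y | [/\ a1 (pw y) = pF (pu' y), leF (pF (pu y)) (pF (pu' y)),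
                          a2 (pw y) = pR (pv' y) & leR (pR (pv' y)) (pR (pv y))]].
pose hm := fun y : Y => ((pw y, pF (pu y)), pR (pv y)).
have c_pw : mcontT pw.
  exact: (mcontT_comp (mcont_fst) (mcontT_TP hOm)).
have c_pu : mcontT (fun y => pF (pu y)).
  apply: (mcontT_cont _ cF).
  apply: (mcontT_comp _ (mcontT_TP polF)).
  exact: (mcont_comp mcont_snd (mcont_comp mcont_fst mcont_fst)).
have c_pu' : mcontT (fun y => pF (pu' y)).
  apply: (mcontT_cont _ cF).
  apply: (mcontT_comp _ (mcontT_TP polF)).
  exact: (mcont_comp mcont_snd (mcont_comp mcont_fst mcont_snd)).
have c_pv : mcontT (fun y => pR (pv y)).
  apply: (mcontT_cont _ cR).
  apply: (mcontT_comp _ (mcontT_TP polR)).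
  exact: (mcont_comp mcont_snd (mcont_comp mcont_snd mcont_fst)).
have c_pv' : mcontT (fun y => pR (pv' y)).
  apply: (mcontT_cont _ cR).
  apply: (mcontT_comp _ (mcontT_TP polR)).
  exact: (mcont_comp mcont_snd (mcont_comp mcont_snd mcont_snd)).
have c_hm : mcontT hm by apply: mcontT_pair; [apply: mcontT_pair|].
have cpF : mcontT (fun u : PFP => pF u) := mcontT_cont (mcontT_TP polF) cF.
have cpR : mcontT (fun v : PRP => pR v) := mcontT_cont (mcontT_TP polR) cR.
have [OF [OF' [hOF sepF]]] := hsep hausF cpF sF.
have [OR [OR' [hOR sepR]]] := hsep hausR cpR sR.
have bZ : mborel Z.
  have -> : Z = [set y | a1 (pw y) = pF (pu' y)] `&`
      ([set y | leF (pF (pu y)) (pF (pu' y))] `&`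
      ([set y | a2 (pw y) = pR (pv' y)] `&` [set y | leR (pR (pv' y)) (pR (pv y))])).
    apply/funext => y; apply/propext; split; first by case.
    by move=> [a [b [c d]]]; split.
  apply: mborelI2; last apply: mborelI2; last apply: mborelI2.
  - apply: (graph_borel hOF sepF _ c_pu') => U oU.
    apply: (@pre_borel Y Omega pw c_pw (a1 @^-1` U)); apply: ha1.
    exact: sub_sigma_algebra.
  - exact: (@pre_borel Y (F * F)%type (fun y => (pF (pu y), pF (pu' y))) (mcontT_pair c_pu c_pu') _ boF).
  - apply: (graph_borel hOR sepR _ c_pv') => U oU.
    apply: (@pre_borel Y Omega pw c_pw (a2 @^-1` U)); apply: ha2.
    exact: sub_sigma_algebra.
  - exact: (@pre_borel Y (R * R)%type (fun y => (pR (pv' y), pR (pv y))) (mcontT_pair c_pv' c_pv) _ boR).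
have [aZ _] := borel_an bZ.
have -> : S = hm @` Z.
  apply/funext => -[[w x1] x2]; apply/propext; split.
    rewrite /S /feasible /const_DP /= => -[h1 h2].
    have [u hu] := sF x1; have [u' hu'] := sF (a1 w).
    have [v hv] := sR x2; have [v' hv'] := sR (a2 w).
    exists ((w : OmP), (((u : PFP), (u' : PFP)), ((v : PRP), (v' : PRP)))).
      by split; rewrite /pw /pu /pu' /pv /pv' /= ?hu ?hu' ?hv ?hv'.
    by rewrite /hm /pw /pu /pv /= hu hv.
  move=> [y [e1 l1 e2 l2] <-]; rewrite /S /feasible /const_DP /hm /=.
  by split; [rewrite -/(a1 _) e1 | rewrite -/(a2 _) e2].
exact: an_analytic aZ c_hm.
Qed.
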